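(* $\mathbb F_0=\mathbb F_{\sqrt{1+x^2}}$.
   Context: An origami pair is a pair $(\mathcal P,\mathcal L)$ where $\mathcal P\subset\mathbb R^2$ is a set of points and $\mathcal L$ is a collection of lines in $\mathbb R^2$ such that: (i) the intersection point of any two non-parallel lines of $\mathcal L$ lies in $\mathcal P$; (ii) for any two distinct points of $\mathcal P$, the line through them is in $\mathcal L$; (iii) for any two distinct points of $\mathcal P$, the perpendicular bisector of the segment joining them is in $\mathcal L$; (iv) if $L_1,L_2\in\mathcal L$, then every line equidistant from $L_1$ and $L_2$ is in $\mathcal L$ (the midline if they are parallel, the angle bisectors if they intersect); (v) if $L_1,L_2\in\mathcal L$, then the mirror reflection of $L_2$ across $L_1$ is in $\mathcal L$. A set $\mathcal P\subset\mathbb R^2$ is closed under origami constructions if there is a collection of lines $\mathcal L$ with $(\mathcal P,\mathcal L)$ an origami pair. The set of origami constructible points is $\mathcal P_0=\bigcap\{\mathcal P : (0,0),(0,1)\in\mathcal P \text{ and } \mathcal P \text{ is closed under origami constructions}\}$. The set of origami numbers is $\mathbb F_0=\{\alpha\in\mathbb R : \exists v_1,v_2\in\mathcal P_0,\ |\alpha|=\operatorname{dist}(v_1,v_2)\}$. $\mathbb F_{\sqrt{1+x^2}}$ denotes the smallest subfield of $\mathbb C$ that, together with any element $x$, contains a square root of $1+x^2$ (equivalently both square roots, since fields are closed under negation). *)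

(* Defs.v *)
From Stdlib Require Import Reals.
From Coquelicot Require Import Coquelicot.
Open Scope R_scope.

Definition point := (R * R)%type.

Definition pdist (p q : point) : R :=
  sqrt ((fst p - fst q)^2 + (snd p - snd q)^2).

Definition is_line (L : point -> Prop) : Prop :=
  exists a b c : R, (a <> 0 \/ b <> 0) /\
    forall p : point, L p <-> a * fst p + b * snd p = c.

Definition same_set (X Y : point -> Prop) : Prop := forall p, X p <-> Y p.

Definition parallel (L1 L2 : point -> Prop) : Prop :=
  same_set L1 L2 \/ ~ (exists p, L1 p /\ L2 p).

Definition line_through (u v : point) : point -> Prop :=
  fun p => (fst p - fst u) * (snd v - snd u) - (snd p - snd u) * (fst v - fst u) = 0.

Definition perp_bisector (u v : point) : point -> Prop :=
  fun p => pdist p u = pdist p v.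

Definition dist_to_line (p : point) (L : point -> Prop) (d : R) : Prop :=
  (exists q, L q /\ pdist p q = d) /\ (forall q, L q -> d <= pdist p q).

(* This gives the midline when
   L1, L2 are parallel and the two angle bisectors when they intersect. *)
Definition equidistant_line (L1 L2 M : point -> Prop) : Prop :=
  is_line M /\ ~ same_set L1 L2 /\
  forall p, M p -> exists d, dist_to_line p L1 d /\ dist_to_line p L2 d.

Definition reflect_pt (L : point -> Prop) (p q : point) : Prop :=
  (L p /\ q = p) \/ (p <> q /\ same_set L (perp_bisector p q)).

Definition reflect_line (L1 L2 : point -> Prop) : point -> Prop :=
  fun q => exists p, L2 p /\ reflect_pt L1 p q.

Definition in_coll (LL : (point -> Prop) -> Prop) (X : point -> Prop) : Prop :=
  exists M, LL M /\ same_set M X.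

Definition origami_pair (P : point -> Prop) (LL : (point -> Prop) -> Prop) : Prop :=
  (forall L, LL L -> is_line L) /\
  (forall L1 L2 p, LL L1 -> LL L2 -> ~ parallel L1 L2 -> L1 p -> L2 p -> P p) /\
  (forall u v, P u -> P v -> u <> v -> in_coll LL (line_through u v)) /\
  (forall u v, P u -> P v -> u <> v -> in_coll LL (perp_bisector u v)) /\
  (forall L1 L2 M, LL L1 -> LL L2 -> equidistant_line L1 L2 M -> in_coll LL M) /\
  (forall L1 L2, LL L1 -> LL L2 -> in_coll LL (reflect_line L1 L2)).

Definition closed_origami (P : point -> Prop) : Prop :=
  exists LL, origami_pair P LL.

Definition P0 (p : point) : Prop :=
  forall P : point -> Prop, P (0, 0) -> P (0, 1) -> closed_origami P -> P p.

Definition F0 (a : R) : Prop :=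
  exists v1 v2, P0 v1 /\ P0 v2 /\ Rabs a = pdist v1 v2.

Definition subfieldC (S : C -> Prop) : Prop :=
  S (RtoC 0) /\ S (RtoC 1) /\
  (forall x y, S x -> S y -> S (Cplus x y)) /\
  (forall x, S x -> S (Copp x)) /\
  (forall x y, S x -> S y -> S (Cmult x y)) /\
  (forall x, S x -> x <> RtoC 0 -> S (Cinv x)).

Definition F_sqrt1x2 (z : C) : Prop :=
  forall S : C -> Prop, subfieldC S ->
    (forall x, S x -> exists y, S y /\ Cmult y y = Cplus (RtoC 1) (Cmult x x)) ->
    S z.

(* Main.v *)
Require Import Defs.
From Stdlib Require Import Reals Lra Psatz.
From Coquelicot Require Import Coquelicot.
Open Scope R_scope.

Definition lin (a b c : R) : point -> Prop := fun p => a * fst p + b * snd p = c.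
Definition nz (a b : R) := a <> 0 \/ b <> 0.

Lemma nz_pos a b : nz a b -> 0 < a*a + b*b.
Proof. intros [H|H]; [assert (0 < a*a) by (apply Rsqr_pos_lt; auto) | assert (0 < b*b) by (apply Rsqr_pos_lt; auto)]; nra. Qed.

Lemma same_set_sym X Y : same_set X Y -> same_set Y X.
Proof. intros H p; specialize (H p); tauto. Qed.
Lemma same_set_trans X Y Z : same_set X Y -> same_set Y Z -> same_set X Z.
Proof. intros H1 H2 p; specialize (H1 p); specialize (H2 p); tauto. Qed.

Lemma lin_scale a b c k : k <> 0 -> same_set (lin a b c) (lin (k*a) (k*b) (k*c)).
Proof. intros Hk p; unfold lin; split; intro H.
- rewrite <- H; ring.
- apply (Rmult_eq_reg_l k); auto. rewrite <- H; ring. Qed.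

Lemma mul_zero_cancel k X : k <> 0 -> k * X = 0 -> X = 0.
Proof. intros Hk H. destruct (Rmult_integral _ _ H); auto. contradiction. Qed.

Lemma orth_transfer a b A B d1 d2 :
  nz A B -> A * b = B * a -> A * d1 + B * d2 = 0 -> a * d1 + b * d2 = 0.
Proof. intros [HA|HB] E H.
- apply (mul_zero_cancel A); auto.
  replace (A * (a*d1+b*d2)) with (a*(A*d1+B*d2) + d2*(A*b - B*a)) by ring.
  rewrite H, E; ring.
- apply (mul_zero_cancel B); auto.
  replace (B * (a*d1+b*d2)) with (b*(A*d1+B*d2) - d1*(A*b - B*a)) by ring.
  rewrite H, E; ring. Qed.

Definition foot (a b c : R) : point := (c*a/(a*a+b*b), c*b/(a*a+b*b)).
Lemma foot_on a b c : nz a b -> lin a b c (foot a b c).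
Proof. intro H. pose proof (nz_pos _ _ H). unfold lin, foot; simpl. field. lra. Qed.

Lemma lin_sub a b c A B C : nz a b -> nz A B ->
  (forall p, lin a b c p -> lin A B C p) -> same_set (lin a b c) (lin A B C).
Proof.
  intros Ha HA Hs.
  pose proof (foot_on a b c Ha) as H0.
  destruct (foot a b c) as [x0 y0].
  assert (H1 : lin a b c (x0 - b, y0 + a)) by (unfold lin in *; simpl in *; lra).
  pose proof (Hs _ H0) as G0. pose proof (Hs _ H1) as G1.
  unfold lin in *; simpl in *.
  assert (E : A * b = B * a) by lra.
  intro q; split; [apply Hs|]. intro Hq.
  assert (H : A * (fst q - x0) + B * (snd q - y0) = 0) by lra.
  pose proof (orth_transfer a b A B _ _ HA E H). lra.
Qed.

Lemma pair_neq (u v : point) : u <> v -> fst u <> fst v \/ snd u <> snd v.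
Proof. destruct u as [u1 u2], v as [v1 v2]; simpl; intro H.
  destruct (Req_dec u1 v1); [subst; right; intro; subst; auto | left; auto]. Qed.

Lemma pdist_sq p q : pdist p q * pdist p q = (fst p - fst q)^2 + (snd p - snd q)^2.
Proof. unfold pdist. rewrite sqrt_sqrt; [ring| apply Rplus_le_le_0_compat; apply pow2_ge_0]. Qed.
Lemma pdist_nonneg p q : 0 <= pdist p q.
Proof. apply sqrt_pos. Qed.

Lemma pdist_eq_iff x u v : pdist x u = pdist x v <->
  (fst x - fst u)^2 + (snd x - snd u)^2 = (fst x - fst v)^2 + (snd x - snd v)^2.
Proof. unfold pdist; split; intro H.
- apply sqrt_inj; auto; apply Rplus_le_le_0_compat; apply pow2_ge_0.
- rewrite H; auto. Qed.

Lemma perp_bis_lin u v : same_set (perp_bisector u v)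
  (lin (2*(fst v - fst u)) (2*(snd v - snd u)) (fst v^2 + snd v^2 - fst u^2 - snd u^2)).
Proof. intro p. unfold perp_bisector, lin. rewrite pdist_eq_iff. split; intro; lra. Qed.

Lemma line_through_lin u v : same_set (line_through u v)
  (lin (snd v - snd u) (- (fst v - fst u)) ((snd v - snd u)*fst u - (fst v - fst u)*snd u)).
Proof. intro p. unfold line_through, lin. split; intro; lra. Qed.
Lemma sqrt_eq_of X y : 0 <= y -> y*y = X -> sqrt X = y.
Proof. intros Hy H. apply sqrt_lem_1; auto. rewrite <- H. nra. Qed.
Lemma le_sqrt_of X y : 0 <= y -> y*y <= X -> y <= sqrt X.
Proof. intros Hy H. rewrite <- (sqrt_square y) by auto. apply sqrt_le_1_alt; auto. Qed.

Lemma dist_same p L M d : dist_to_line p L d -> same_set L M -> dist_to_line p M d.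
Proof. intros [[q [Hq Hd]] H2] E. split.
- exists q; split; auto; apply E; auto.
- intros q' Hq'; apply H2; apply E; auto. Qed.

Lemma dist_unique p L d d' : dist_to_line p L d -> dist_to_line p L d' -> d = d'.
Proof. intros [[q [Hq Hd]] H2] [[q' [Hq' Hd']] H2'].
  pose proof (H2 _ Hq'). pose proof (H2' _ Hq). lra. Qed.

Lemma dist_lin p a b c : nz a b ->
  dist_to_line p (lin a b c) (Rabs (a*fst p + b*snd p - c) / sqrt (a*a+b*b)).
Proof.
  intro Hnz. pose proof (nz_pos _ _ Hnz) as Hn.
  set (n := a*a+b*b) in *. set (l := a*fst p + b*snd p - c).
  assert (Hs : 0 < sqrt n) by (apply sqrt_lt_R0; auto).
  assert (Hss : sqrt n * sqrt n = n) by (apply sqrt_sqrt; lra).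
  assert (Hl2 : Rabs l * Rabs l = l * l) by (rewrite <- Rabs_mult; apply Rabs_pos_eq; nra).
  assert (Hy : 0 <= Rabs l / sqrt n) by (apply Rdiv_le_0_compat; [apply Rabs_pos|auto]).
  assert (Hyy : Rabs l / sqrt n * (Rabs l / sqrt n) = l*l/n).
  { unfold Rdiv. replace (Rabs l * / sqrt n * (Rabs l * / sqrt n)) with
      ((Rabs l * Rabs l) / (sqrt n * sqrt n)) by (field; lra).
    rewrite Hl2, Hss; reflexivity. }
  split.
  - exists (fst p - l/n*a, snd p - l/n*b). split.
    + unfold lin, l; simpl. unfold n; field. unfold n in Hn; lra.
    + unfold pdist; simpl. apply sqrt_eq_of; auto. rewrite Hyy. unfold n; field. unfold n in Hn; lra.
  - intros q Hq. unfold pdist. apply le_sqrt_of; auto. rewrite Hyy.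
    unfold lin in Hq.
    assert (El : l = a*(fst p - fst q) + b*(snd p - snd q)) by (unfold l; lra).
    apply (Rmult_le_reg_r n); auto. unfold Rdiv. rewrite Rmult_assoc, Rinv_l by lra. rewrite Rmult_1_r.
    rewrite El. unfold n.
    assert (0 <= (a*(snd p - snd q) - b*(fst p - fst q))^2) by apply pow2_ge_0. nra.
Qed.
Definition sig (a b c : R) (p : point) : point :=
  (fst p - 2*(a*fst p + b*snd p - c)/(a*a+b*b)*a, snd p - 2*(a*fst p + b*snd p - c)/(a*a+b*b)*b).

Lemma lin_eqc a b c a' b' c' : a = a' -> b = b' -> c = c' -> same_set (lin a b c) (lin a' b' c').
Proof. intros -> -> -> p; tauto. Qed.

Lemma same_lin_par a b c A B C : nz a b -> same_set (lin a b c) (lin A B C) -> A*b = B*a.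
Proof. intros Ha E.
  pose proof (foot_on a b c Ha) as H0. destruct (foot a b c) as [x0 y0].
  assert (H1 : lin a b c (x0 - b, y0 + a)) by (unfold lin in *; simpl in *; lra).
  apply E in H0; apply E in H1. unfold lin in *; simpl in *. lra. Qed.

Lemma point_eq (x y : point) : fst x = fst y -> snd x = snd y -> x = y.
Proof. destruct x, y; simpl; intros -> ->; auto. Qed.

Lemma reflect_pt_iff L a b c p q : nz a b -> same_set L (lin a b c) ->
  (reflect_pt L p q <-> q = sig a b c p).
Proof.
  intros Hnz E. pose proof (nz_pos _ _ Hnz) as Hn.
  set (l := a*fst p + b*snd p - c).
  split.
  - intros [[Hp ->]|[Hpq E2]].
    + apply E in Hp. unfold lin in Hp. apply point_eq; unfold sig; simpl;
      replace (a * fst p + b * snd p - c) with 0 by lra; field; lra.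
    + assert (E3 : same_set (lin a b c) (lin (2*(fst q - fst p)) (2*(snd q - snd p))
         (fst q^2 + snd q^2 - fst p^2 - snd p^2))).
      { eapply same_set_trans; [apply same_set_sym; exact E|].
        eapply same_set_trans; [exact E2| apply perp_bis_lin]. }
      pose proof (same_lin_par _ _ _ _ _ _ Hnz E3) as Par.
      assert (Hm : lin a b c ((fst p + fst q)/2, (snd p + snd q)/2)).
      { apply E3. unfold lin; simpl. field. }
      unfold lin in Hm; simpl in Hm.
      assert (S : a*(fst q - fst p) + b*(snd q - snd p) = -2*l) by (unfold l; lra).
      apply point_eq; unfold sig; simpl; fold l.
      * apply (Rmult_eq_reg_r (a*a+b*b)); [|lra].
        replace ((fst p - 2 * l / (a * a + b * b) * a) * (a * a + b * b)) with
          (fst p * (a*a+b*b) - 2*l*a) by (field; lra).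
        replace (fst q * (a*a+b*b)) with (fst p * (a*a+b*b) + a*(a*(fst q - fst p) + b*(snd q - snd p)) + b*(b*(fst q - fst p) - a*(snd q - snd p))) by ring.
        rewrite S. replace (b*(fst q - fst p) - a*(snd q - snd p)) with 0 by lra. ring.
      * apply (Rmult_eq_reg_r (a*a+b*b)); [|lra].
        replace ((snd p - 2 * l / (a * a + b * b) * b) * (a * a + b * b)) with
          (snd p * (a*a+b*b) - 2*l*b) by (field; lra).
        replace (snd q * (a*a+b*b)) with (snd p * (a*a+b*b) + b*(a*(fst q - fst p) + b*(snd q - snd p)) - a*(b*(fst q - fst p) - a*(snd q - snd p))) by ring.
        rewrite S. replace (b*(fst q - fst p) - a*(snd q - snd p)) with 0 by lra. ring.
  - intros ->. destruct (Req_dec l 0) as [Hl|Hl].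
    + left. split.
      * apply E. unfold lin; unfold l in Hl; lra.
      * apply point_eq; unfold sig; simpl; fold l; rewrite Hl; field; lra.
    + right. set (t := 2*l/(a*a+b*b)).
      assert (Ht : t <> 0). { intro H. apply Hl.
        apply (Rmult_eq_reg_l 2); [|lra]. rewrite Rmult_0_r.
        replace (2*l) with (t*(a*a+b*b)) by (unfold t; field; lra). rewrite H; ring. }
      unfold sig. fold l. replace (2 * l / (a * a + b * b)) with t by reflexivity. split.
      * intro H. assert (H1 : fst p = fst p - t*a) by (rewrite H at 1; reflexivity).
        assert (H2 : snd p = snd p - t*b) by (rewrite H at 1; reflexivity).
        destruct Hnz as [Ha|Hb]; [apply Ha | apply Hb];
        apply (mul_zero_cancel t); auto; lra.
      * eapply same_set_trans; [exact E|].
        eapply same_set_trans; [|apply same_set_sym; apply perp_bis_lin]. simpl.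
        eapply same_set_trans; [apply (lin_scale _ _ _ (-2*t)); lra|].
        apply lin_eqc; try ring.
        assert (Et : t*(a*a+b*b) = 2*l) by (unfold t; field; lra).
        unfold l in Et. nra.
Qed.

Lemma sig_invol a b c p : nz a b -> sig a b c (sig a b c p) = p.
Proof. intro H. pose proof (nz_pos _ _ H). destruct p as [x y].
  apply point_eq; unfold sig; simpl; field; lra. Qed.

Lemma reflect_line_lin L1 L2 a b c a' b' c' : nz a b ->
  same_set L1 (lin a b c) -> same_set L2 (lin a' b' c') ->
  same_set (reflect_line L1 L2)
    (lin (a' - 2*(a*a'+b*b')/(a*a+b*b)*a) (b' - 2*(a*a'+b*b')/(a*a+b*b)*b)
         (c' - 2*(a*a'+b*b')/(a*a+b*b)*c)).
Proof.
  intros Hnz E1 E2. pose proof (nz_pos _ _ Hnz).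
  intro q. unfold reflect_line. split.
  - intros [p [Hp Hr]]. apply (reflect_pt_iff _ _ _ _ _ _ Hnz E1) in Hr. subst q.
    apply E2 in Hp. unfold lin in *. destruct p as [x y]; unfold sig; simpl in *.
    rewrite <- Hp. field. lra.
  - intro Hq. exists (sig a b c q). split.
    + apply E2. unfold lin in *. destruct q as [x y]; unfold sig; simpl in *.
      set (k := 2 * (a * a' + b * b') / (a * a + b * b)) in *.
      assert (Ec : c' = (a' - k * a) * x + (b' - k * b) * y + k*c) by lra.
      rewrite Ec. unfold k. field. lra.
    + apply (reflect_pt_iff _ _ _ _ _ _ Hnz E1). rewrite sig_invol; auto.
Qed.

Lemma refl_nz a b a' b' : nz a b -> nz a' b' ->
  nz (a' - 2*(a*a'+b*b')/(a*a+b*b)*a) (b' - 2*(a*a'+b*b')/(a*a+b*b)*b).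
Proof. intros H H'. pose proof (nz_pos _ _ H). pose proof (nz_pos _ _ H').
  set (A := a' - 2*(a*a'+b*b')/(a*a+b*b)*a). set (B := b' - 2*(a*a'+b*b')/(a*a+b*b)*b).
  assert (E : A*A + B*B = a'*a'+b'*b') by (unfold A, B; field; lra).
  destruct (Req_dec A 0) as [HA|HA]; [|left; auto].
  destruct (Req_dec B 0) as [HB|HB]; [|right; auto].
  rewrite HA, HB in E. lra. Qed.
Definition Kr (r : R) : Prop := F_sqrt1x2 (RtoC r).

Definition SqCl (S : C -> Prop) := forall x, S x -> exists y, S y /\ Cmult y y = Cplus (RtoC 1) (Cmult x x).

Lemma RtoC_add x y : RtoC (x + y) = Cplus (RtoC x) (RtoC y).
Proof. apply point_eq; simpl; ring. Qed.
Lemma RtoC_op x : RtoC (- x) = Copp (RtoC x).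
Proof. apply point_eq; simpl; ring. Qed.
Lemma RtoC_mul x y : RtoC (x * y) = Cmult (RtoC x) (RtoC y).
Proof. apply point_eq; simpl; ring. Qed.
Lemma RtoC_iv x : x <> 0 -> RtoC (/ x) = Cinv (RtoC x).
Proof. intro H. apply point_eq; simpl; field; auto. Qed.
Lemma RtoC_neq0 x : x <> 0 -> RtoC x <> RtoC 0.
Proof. intros H E. apply H. apply (f_equal fst) in E. exact E. Qed.

Lemma S_sqrt S : subfieldC S -> SqCl S -> forall x, S (RtoC x) -> S (RtoC (sqrt (1 + x*x))).
Proof.
  intros HS Hq x Hx. destruct HS as [_ [_ [_ [Hop _]]]].
  destruct (Hq _ Hx) as [[u v] [Hy E]].
  unfold Cmult, Cplus, RtoC in E; simpl in E.
  injection E as E1 E2.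
  assert (Hv : v = 0).
  { destruct (Req_dec u 0) as [Hu|Hu].
    - subst u. nra.
    - apply (mul_zero_cancel (2*u)); [lra|]. lra. }
  subst v.
  assert (Hp : 0 <= 1 + x*x) by nra.
  destruct (Rle_dec 0 u) as [Hu|Hu].
  - replace (sqrt (1+x*x)) with u. { exact Hy. }
    symmetry. apply sqrt_eq_of; auto. lra.
  - replace (RtoC (sqrt (1+x*x))) with (Copp (u, 0)). { apply Hop; exact Hy. }
    apply point_eq; simpl; [|ring]. symmetry. apply sqrt_eq_of; lra.
Qed.

Lemma Kr_0 : Kr 0.
Proof. intros S HS _. apply HS. Qed.
Lemma Kr_1 : Kr 1.
Proof. intros S HS _. apply HS. Qed.
Lemma Kr_add x y : Kr x -> Kr y -> Kr (x + y).
Proof. intros Hx Hy S HS Hq. rewrite RtoC_add. apply HS; [apply Hx|apply Hy]; auto. Qed.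
Lemma Kr_opp x : Kr x -> Kr (- x).
Proof. intros Hx S HS Hq. rewrite RtoC_op. apply HS; apply Hx; auto. Qed.
Lemma Kr_mul x y : Kr x -> Kr y -> Kr (x * y).
Proof. intros Hx Hy S HS Hq. rewrite RtoC_mul. apply HS; [apply Hx|apply Hy]; auto. Qed.
Lemma Kr_inv x : Kr x -> x <> 0 -> Kr (/ x).
Proof. intros Hx H0 S HS Hq. rewrite (RtoC_iv x H0). apply HS; [apply Hx; auto|apply RtoC_neq0; auto]. Qed.
Lemma Kr_sq x : Kr x -> Kr (sqrt (1 + x*x)).
Proof. intros Hx S HS Hq. apply S_sqrt; auto. apply Hx; auto. Qed.
Lemma Kr_sub x y : Kr x -> Kr y -> Kr (x - y).
Proof. intros; unfold Rminus; apply Kr_add; auto; apply Kr_opp; auto. Qed.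
Lemma Kr_div x y : Kr x -> Kr y -> y <> 0 -> Kr (x / y).
Proof. intros; unfold Rdiv; apply Kr_mul; auto; apply Kr_inv; auto. Qed.
Lemma Kr_2 : Kr 2.
Proof. replace 2 with (1+1) by ring. apply Kr_add; apply Kr_1. Qed.
Lemma Kr_pow2 x : Kr x -> Kr (x^2).
Proof. intro; simpl; rewrite Rmult_1_r; apply Kr_mul; auto. Qed.
Lemma Kr_abs x : Kr x -> Kr (Rabs x).
Proof. intro H. unfold Rabs; destruct (Rcase_abs x); auto; apply Kr_opp; auto. Qed.

Lemma Kr_norm x y : Kr x -> Kr y -> Kr (sqrt (x*x + y*y)).
Proof. intros Hx Hy. destruct (Req_dec x 0) as [H0|H0].
  - subst x. replace (0*0+y*y) with (Rsqr y) by (unfold Rsqr; ring).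
    rewrite sqrt_Rsqr_abs. apply Kr_abs; auto.
  - replace (sqrt (x*x+y*y)) with (Rabs x * sqrt (1 + (y/x)*(y/x))).
    + apply Kr_mul; [apply Kr_abs; auto|apply Kr_sq; apply Kr_div; auto].
    + symmetry. apply sqrt_eq_of.
      * apply Rmult_le_pos; [apply Rabs_pos|apply sqrt_pos].
      * assert (Ha : Rabs x * Rabs x = x * x) by (rewrite <- Rabs_mult; apply Rabs_pos_eq; nra).
        assert (Hs : sqrt (1 + y / x * (y / x)) * sqrt (1 + y / x * (y / x)) = 1 + y/x*(y/x))
          by (apply sqrt_sqrt; nra).
        replace (Rabs x * sqrt (1 + y / x * (y / x)) * (Rabs x * sqrt (1 + y / x * (y / x))))
          with ((Rabs x * Rabs x) * (sqrt (1 + y / x * (y / x)) * sqrt (1 + y / x * (y / x)))) by ring.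
        rewrite Ha, Hs. field; auto.
Qed.
Definition PK (p : point) : Prop := Kr (fst p) /\ Kr (snd p).
Definition LK (L : point -> Prop) : Prop :=
  exists a b c, Kr a /\ Kr b /\ Kr c /\ nz a b /\ L = lin a b c.

Lemma in_coll_LK X a b c : Kr a -> Kr b -> Kr c -> nz a b -> same_set X (lin a b c) -> in_coll LK X.
Proof. intros. exists (lin a b c). split; [exists a, b, c; auto| apply same_set_sym; auto]. Qed.

Lemma lin_is_line a b c : nz a b -> is_line (lin a b c).
Proof. intro H. exists a, b, c. split; auto. intro p; tauto. Qed.

Lemma par_of_det a1 b1 c1 a2 b2 c2 p : nz a1 b1 -> nz a2 b2 -> a1*b2 = a2*b1 ->
  lin a1 b1 c1 p -> lin a2 b2 c2 p -> same_set (lin a1 b1 c1) (lin a2 b2 c2).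
Proof. intros H1 H2 D Hp1 Hp2. apply lin_sub; auto. intros q Hq.
  unfold lin in *.
  assert (a1 * (fst q - fst p) + b1 * (snd q - snd p) = 0) by lra.
  assert (a2 * (fst q - fst p) + b2 * (snd q - snd p) = 0).
  { apply (orth_transfer a2 b2 a1 b1); auto. lra. }
  lra. Qed.

Lemma K_inter a1 b1 c1 a2 b2 c2 p : Kr a1 -> Kr b1 -> Kr c1 -> Kr a2 -> Kr b2 -> Kr c2 ->
  a1*b2 - a2*b1 <> 0 -> lin a1 b1 c1 p -> lin a2 b2 c2 p -> PK p.
Proof. intros ? ? ? ? ? ? D H1 H2. unfold lin in *. split.
  - replace (fst p) with ((c1*b2 - c2*b1)/(a1*b2-a2*b1)).
    + apply Kr_div; [apply Kr_sub; apply Kr_mul; auto|apply Kr_sub; apply Kr_mul; auto|exact D].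
    + apply (Rmult_eq_reg_r (a1*b2-a2*b1)); auto. unfold Rdiv; rewrite Rmult_assoc, Rinv_l; auto.
      rewrite <- H1, <- H2; ring.
  - replace (snd p) with ((a1*c2 - a2*c1)/(a1*b2-a2*b1)).
    + apply Kr_div; [apply Kr_sub; apply Kr_mul; auto|apply Kr_sub; apply Kr_mul; auto|exact D].
    + apply (Rmult_eq_reg_r (a1*b2-a2*b1)); auto. unfold Rdiv; rewrite Rmult_assoc, Rinv_l; auto.
      rewrite <- H1, <- H2; ring.
Qed.

Lemma prod_affine_zero u v w z : (forall t, (u + v*t)*(w + z*t) = 0) ->
  (u = 0 /\ v = 0) \/ (w = 0 /\ z = 0).
Proof. intro H. pose proof (H 0) as H0. pose proof (H 1) as H1. pose proof (H (-1)) as Hm.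
  assert (E0 : u*w = 0) by (rewrite <- H0; ring).
  assert (E1 : v*z = 0) by nra.
  destruct (Rmult_integral _ _ E0) as [Hu|Hw].
  - subst u. assert (E2 : v*w = 0) by nra.
    destruct (Req_dec v 0); [left; auto|right].
    split; [apply (mul_zero_cancel v); auto| apply (mul_zero_cancel v); auto].
  - subst w. assert (E2 : u*z = 0) by nra.
    destruct (Req_dec z 0); [right; auto|left].
    split; [apply (mul_zero_cancel z); [auto|lra]| apply (mul_zero_cancel z); [auto|lra]].
Qed.

Lemma lin_param al be ga q : nz al be -> lin al be ga q ->
  let p0 := foot al be ga in
  let t := (al*(snd q - snd p0) - be*(fst q - fst p0))/(al*al+be*be) in
  q = (fst p0 - t*be, snd p0 + t*al).
Proof. intros H Hq p0 t. pose proof (foot_on al be ga H) as Hf. fold p0 in Hf.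
  clearbody p0. pose proof (nz_pos _ _ H). unfold lin in *.
  assert (E : al*(fst q - fst p0) + be*(snd q - snd p0) = 0) by lra.
  apply point_eq; simpl; unfold t.
  - apply (Rmult_eq_reg_r (al*al+be*be)); [|lra].
    replace ((fst p0 - (al * (snd q - snd p0) - be * (fst q - fst p0)) / (al * al + be * be) * be) *
      (al * al + be * be)) with (fst p0 * (al*al+be*be) - (al * (snd q - snd p0) - be * (fst q - fst p0))*be) by (field; lra).
    replace (fst q * (al*al+be*be)) with (fst p0 * (al*al+be*be) + al*(al*(fst q - fst p0) + be*(snd q - snd p0)) + be*(be*(fst q - fst p0) - al*(snd q - snd p0))) by ring.
    rewrite E. ring.
  - apply (Rmult_eq_reg_r (al*al+be*be)); [|lra].
    replace ((snd p0 + (al * (snd q - snd p0) - be * (fst q - fst p0)) / (al * al + be * be) * al) *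
      (al * al + be * be)) with (snd p0 * (al*al+be*be) + (al * (snd q - snd p0) - be * (fst q - fst p0))*al) by (field; lra).
    replace (snd q * (al*al+be*be)) with (snd p0 * (al*al+be*be) + be*(al*(fst q - fst p0) + be*(snd q - snd p0)) + al*(al*(snd q - snd p0) - be*(fst q - fst p0))) by ring.
    rewrite E. ring.
Qed.

Lemma line_in_union al be ga A1 B1 C1 A2 B2 C2 : nz al be ->
  (forall q, lin al be ga q -> (A1*fst q + B1*snd q - C1)*(A2*fst q + B2*snd q - C2) = 0) ->
  (forall q, lin al be ga q -> A1*fst q + B1*snd q - C1 = 0) \/
  (forall q, lin al be ga q -> A2*fst q + B2*snd q - C2 = 0).
Proof. intros H Hz.
  set (p0 := foot al be ga).
  assert (Hpt : forall t, lin al be ga (fst p0 - t*be, snd p0 + t*al)).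
  { intro t. pose proof (foot_on al be ga H) as Hf. fold p0 in Hf. unfold lin in *. cbn [fst snd].
    transitivity (al*fst p0 + be*snd p0); [ring|exact Hf]. }
  assert (Hall : forall t, ((A1*fst p0 + B1*snd p0 - C1) + (- A1*be + B1*al)*t) *
     ((A2*fst p0 + B2*snd p0 - C2) + (- A2*be + B2*al)*t) = 0).
  { intro t. etransitivity; [|apply (Hz _ (Hpt t))]. simpl. ring. }
  destruct (prod_affine_zero _ _ _ _ Hall) as [[E1 E2]|[E1 E2]]; [left|right];
  intros q Hq; rewrite (lin_param _ _ _ _ H Hq); cbn [fst snd].
  - match goal with |- context [fst (foot al be ga) - ?t * be] => set (tt := t) end.
    transitivity ((A1 * fst p0 + B1 * snd p0 - C1) + (- A1*be + B1*al)*tt); [unfold p0; ring|].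
    rewrite E1, E2; ring.
  - match goal with |- context [fst (foot al be ga) - ?t * be] => set (tt := t) end.
    transitivity ((A2 * fst p0 + B2 * snd p0 - C2) + (- A2*be + B2*al)*tt); [unfold p0; ring|].
    rewrite E1, E2; ring.
Qed.
Lemma prop_same a1 b1 c1 a2 b2 c2 r k : r <> 0 -> k <> 0 ->
  (forall p, r*(a1*fst p + b1*snd p - c1) = k*(a2*fst p + b2*snd p - c2)) ->
  same_set (lin a1 b1 c1) (lin a2 b2 c2).
Proof. intros Hr Hk H p. specialize (H p). unfold lin. split; intro E.
  - assert (k*(a2*fst p + b2*snd p - c2) = 0) by (rewrite <- H; rewrite E; ring).
    assert (a2*fst p + b2*snd p - c2 = 0) by (apply (mul_zero_cancel k); auto). lra.
  - assert (r*(a1*fst p + b1*snd p - c1) = 0) by (rewrite H; rewrite E; ring).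
    assert (a1*fst p + b1*snd p - c1 = 0) by (apply (mul_zero_cancel r); auto). lra. Qed.

Lemma LK_iv L1 L2 M : LK L1 -> LK L2 -> equidistant_line L1 L2 M -> in_coll LK M.
Proof.
  intros [a1 [b1 [c1 [Ka1 [Kb1 [Kc1 [N1 ->]]]]]]] [a2 [b2 [c2 [Ka2 [Kb2 [Kc2 [N2 ->]]]]]]]
    [[al [be [ga [Nm EM]]]] [Hne Heq]].
  assert (EM' : same_set M (lin al be ga)) by (intro p; apply EM).
  set (r1 := sqrt (a1*a1+b1*b1)). set (r2 := sqrt (a2*a2+b2*b2)).
  assert (Hr1 : 0 < r1) by (apply sqrt_lt_R0; apply nz_pos; auto).
  assert (Hr2 : 0 < r2) by (apply sqrt_lt_R0; apply nz_pos; auto).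
  assert (Kr1 : Kr r1) by (apply Kr_norm; auto).
  assert (Kr2 : Kr r2) by (apply Kr_norm; auto).
  assert (Hz : forall q, lin al be ga q ->
    ((r2*a1 - r1*a2)*fst q + (r2*b1 - r1*b2)*snd q - (r2*c1 - r1*c2)) *
    ((r2*a1 + r1*a2)*fst q + (r2*b1 + r1*b2)*snd q - (r2*c1 + r1*c2)) = 0).
  { intros q Hq. apply EM' in Hq. destruct (Heq q Hq) as [d [D1 D2]].
    pose proof (dist_unique _ _ _ _ D1 (dist_lin q a1 b1 c1 N1)) as E1.
    pose proof (dist_unique _ _ _ _ D2 (dist_lin q a2 b2 c2 N2)) as E2.
    fold r1 in E1. fold r2 in E2.
    set (l1 := a1 * fst q + b1 * snd q - c1) in *.
    set (l2 := a2 * fst q + b2 * snd q - c2) in *.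
    assert (E : Rabs l1 * r2 = Rabs l2 * r1).
    { rewrite E1 in E2. apply (Rmult_eq_reg_r (/ (r1*r2))).
      2: { apply Rinv_neq_0_compat; nra. }
      replace (Rabs l1 * r2 * / (r1 * r2)) with (Rabs l1 / r1) by (field; lra).
      rewrite E2. field; lra. }
    assert (Sq : (Rabs l1 * r2) * (Rabs l1 * r2) = (Rabs l2 * r1) * (Rabs l2 * r1)) by (rewrite E; auto).
    assert (A1 : Rabs l1 * Rabs l1 = l1 * l1) by (rewrite <- Rabs_mult; apply Rabs_pos_eq; nra).
    assert (A2 : Rabs l2 * Rabs l2 = l2 * l2) by (rewrite <- Rabs_mult; apply Rabs_pos_eq; nra).
    transitivity ((r2*l1)*(r2*l1) - (r1*l2)*(r1*l2)); [unfold l1, l2; ring|].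
    replace ((r2*l1)*(r2*l1)) with ((Rabs l1 * Rabs l1) * (r2*r2)) by (rewrite A1; ring).
    replace ((r1*l2)*(r1*l2)) with ((Rabs l2 * Rabs l2) * (r1*r1)) by (rewrite A2; ring).
    replace (Rabs l1 * Rabs l1 * (r2 * r2)) with ((Rabs l1 * r2) * (Rabs l1 * r2)) by ring.
    rewrite Sq. ring. }
  pose proof (foot_on al be ga Nm) as Hf.
  destruct (line_in_union _ _ _ _ _ _ _ _ _ Nm Hz) as [Z|Z].
  - destruct (Req_dec (r2*a1 - r1*a2) 0) as [HA|HA];
    [destruct (Req_dec (r2*b1 - r1*b2) 0) as [HB|HB]|].
    + exfalso. apply Hne. apply (prop_same _ _ _ _ _ _ r2 r1); try lra.
      pose proof (Z _ Hf) as Zf. rewrite HA, HB in Zf.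
      intro p. assert (E3 : (r2 * a1 - r1 * a2) * fst p + (r2 * b1 - r1 * b2) * snd p - (r2 * c1 - r1 * c2) = 0)
        by (rewrite HA, HB; lra). lra.
    + apply (in_coll_LK _ (r2*a1 - r1*a2) (r2*b1 - r1*b2) (r2*c1 - r1*c2));
        try (apply Kr_sub; apply Kr_mul; auto); [right; auto|].
      eapply same_set_trans; [exact EM'|]. apply lin_sub; auto; [right; auto|].
      intros q Hq; pose proof (Z q Hq); unfold lin; lra.
    + apply (in_coll_LK _ (r2*a1 - r1*a2) (r2*b1 - r1*b2) (r2*c1 - r1*c2));
        try (apply Kr_sub; apply Kr_mul; auto); [left; auto|].
      eapply same_set_trans; [exact EM'|]. apply lin_sub; auto; [left; auto|].
      intros q Hq; pose proof (Z q Hq); unfold lin; lra.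
  - destruct (Req_dec (r2*a1 + r1*a2) 0) as [HA|HA];
    [destruct (Req_dec (r2*b1 + r1*b2) 0) as [HB|HB]|].
    + exfalso. apply Hne. apply (prop_same _ _ _ _ _ _ r2 (-r1)); try lra.
      pose proof (Z _ Hf) as Zf. rewrite HA, HB in Zf.
      intro p. assert (E3 : (r2 * a1 + r1 * a2) * fst p + (r2 * b1 + r1 * b2) * snd p - (r2 * c1 + r1 * c2) = 0)
        by (rewrite HA, HB; lra). lra.
    + apply (in_coll_LK _ (r2*a1 + r1*a2) (r2*b1 + r1*b2) (r2*c1 + r1*c2));
        try (apply Kr_add; apply Kr_mul; auto); [right; auto|].
      eapply same_set_trans; [exact EM'|]. apply lin_sub; auto; [right; auto|].
      intros q Hq; pose proof (Z q Hq); unfold lin; lra.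
    + apply (in_coll_LK _ (r2*a1 + r1*a2) (r2*b1 + r1*b2) (r2*c1 + r1*c2));
        try (apply Kr_add; apply Kr_mul; auto); [left; auto|].
      eapply same_set_trans; [exact EM'|]. apply lin_sub; auto; [left; auto|].
      intros q Hq; pose proof (Z q Hq); unfold lin; lra.
Qed.
Lemma PK_LK_pair : origami_pair PK LK.
Proof.
  split; [|split; [|split; [|split; [|split]]]].
  - intros L [a [b [c [_ [_ [_ [N ->]]]]]]]. apply lin_is_line; auto.
  - intros L1 L2 p [a1 [b1 [c1 [Ka1 [Kb1 [Kc1 [N1 ->]]]]]]] [a2 [b2 [c2 [Ka2 [Kb2 [Kc2 [N2 ->]]]]]]] Hnp H1 H2.
    destruct (Req_dec (a1*b2 - a2*b1) 0) as [D|D].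
    + exfalso. apply Hnp. left. apply (par_of_det _ _ _ _ _ _ p); auto. lra.
    + apply (K_inter a1 b1 c1 a2 b2 c2); auto.
  - intros u v [Ku1 Ku2] [Kv1 Kv2] Huv.
    apply (in_coll_LK _ (snd v - snd u) (- (fst v - fst u)) ((snd v - snd u)*fst u - (fst v - fst u)*snd u)).
    + apply Kr_sub; auto.
    + apply Kr_opp; apply Kr_sub; auto.
    + apply Kr_sub; apply Kr_mul; auto; apply Kr_sub; auto.
    + destruct (pair_neq _ _ Huv) as [H|H]; [right|left]; intro; apply H; lra.
    + apply line_through_lin.
  - intros u v [Ku1 Ku2] [Kv1 Kv2] Huv.
    apply (in_coll_LK _ (2*(fst v - fst u)) (2*(snd v - snd u)) (fst v^2 + snd v^2 - fst u^2 - snd u^2)).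
    + apply Kr_mul; [apply Kr_2|apply Kr_sub; auto].
    + apply Kr_mul; [apply Kr_2|apply Kr_sub; auto].
    + repeat apply Kr_sub; try apply Kr_add; apply Kr_pow2; auto.
    + destruct (pair_neq _ _ Huv) as [H|H]; [left|right]; intro; apply H; lra.
    + apply perp_bis_lin.
  - apply LK_iv.
  - intros L1 L2 [a [b [c [Ka [Kb [Kc [N ->]]]]]]] [a' [b' [c' [Ka' [Kb' [Kc' [N' ->]]]]]]].
    pose proof (nz_pos _ _ N).
    assert (Kk : Kr (2 * (a * a' + b * b') / (a * a + b * b))).
    { apply Kr_div; [apply Kr_mul; [apply Kr_2|apply Kr_add; apply Kr_mul; auto]
                    |apply Kr_add; apply Kr_mul; auto|lra]. }
    apply (in_coll_LK _ (a' - 2*(a*a'+b*b')/(a*a+b*b)*a) (b' - 2*(a*a'+b*b')/(a*a+b*b)*b)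
         (c' - 2*(a*a'+b*b')/(a*a+b*b)*c)).
    + apply Kr_sub; auto; apply Kr_mul; auto.
    + apply Kr_sub; auto; apply Kr_mul; auto.
    + apply Kr_sub; auto; apply Kr_mul; auto.
    + apply refl_nz; auto.
    + apply reflect_line_lin; auto; intro p; tauto.
Qed.

Lemma dir1 a : F0 a -> Kr a.
Proof.
  intros [v1 [v2 [H1 [H2 E]]]].
  assert (HP : forall v, P0 v -> PK v).
  { intros v Hv. apply Hv.
    - split; [apply Kr_0|apply Kr_0].
    - split; [apply Kr_0|apply Kr_1].
    - exists LK. apply PK_LK_pair. }
  destruct (HP _ H1) as [K11 K12]. destruct (HP _ H2) as [K21 K22].
  assert (Kd : Kr (pdist v1 v2)).
  { unfold pdist. replace ((fst v1 - fst v2)^2 + (snd v1 - snd v2)^2) with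
      ((fst v1 - fst v2)*(fst v1 - fst v2) + (snd v1 - snd v2)*(snd v1 - snd v2)) by ring.
    apply Kr_norm; apply Kr_sub; auto. }
  rewrite <- E in Kd. unfold Rabs in Kd. destruct (Rcase_abs a); auto.
  replace a with (- - a) by ring. apply Kr_opp; auto.
Qed.
Definition HasL (LL : (point -> Prop) -> Prop) (a b c : R) : Prop :=
  exists M, LL M /\ same_set M (lin a b c).

Lemma HasL_same LL a b c a' b' c' : HasL LL a b c -> same_set (lin a b c) (lin a' b' c') -> HasL LL a' b' c'.
Proof. intros [M [HM E]] E'. exists M. split; auto. eapply same_set_trans; eauto. Qed.

Lemma HasL_eqc LL a b c a' b' c' : HasL LL a b c -> a = a' -> b = b' -> c = c' -> HasL LL a' b' c'.
Proof. intros H -> -> ->; auto. Qed.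

Lemma HasL_scale LL a b c k : HasL LL a b c -> k <> 0 -> HasL LL (k*a) (k*b) (k*c).
Proof. intros H Hk. eapply HasL_same; eauto. apply lin_scale; auto. Qed.

Lemma HasL_coll LL X a b c : in_coll LL X -> same_set X (lin a b c) -> HasL LL a b c.
Proof. intros [M [HM E]] E'. exists M; split; auto. eapply same_set_trans; eauto. Qed.

Lemma HL_through P LL u v : origami_pair P LL -> P u -> P v -> u <> v ->
  HasL LL (snd v - snd u) (- (fst v - fst u)) ((snd v - snd u)*fst u - (fst v - fst u)*snd u).
Proof. intros [_ [_ [Hii _]]] Hu Hv Huv. eapply HasL_coll; [apply (Hii u v Hu Hv Huv)|apply line_through_lin]. Qed.

Lemma HL_bis P LL u v : origami_pair P LL -> P u -> P v -> u <> v ->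
  HasL LL (2*(fst v - fst u)) (2*(snd v - snd u)) (fst v^2 + snd v^2 - fst u^2 - snd u^2).
Proof. intros [_ [_ [_ [Hiii _]]]] Hu Hv Huv. eapply HasL_coll; [apply (Hiii u v Hu Hv Huv)|apply perp_bis_lin]. Qed.

Lemma Pt_meet P LL a1 b1 c1 a2 b2 c2 p : origami_pair P LL ->
  HasL LL a1 b1 c1 -> HasL LL a2 b2 c2 -> a1*b2 - a2*b1 <> 0 ->
  lin a1 b1 c1 p -> lin a2 b2 c2 p -> P p.
Proof. intros [_ [Hi _]] [M1 [HM1 E1]] [M2 [HM2 E2]] D H1 H2.
  apply (Hi M1 M2 p HM1 HM2); [| apply E1; auto | apply E2; auto].
  intros [S|Dj].
  - assert (Hq : lin a1 b1 c1 (fst p - b1, snd p + a1)) by (unfold lin in *; simpl; nra).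
    apply E1 in Hq. apply S in Hq. apply E2 in Hq. unfold lin in *; simpl in *. apply D. nra.
  - apply Dj. exists p. split; [apply E1|apply E2]; auto.
Qed.

Lemma HL_refl P LL a b c a' b' c' : origami_pair P LL -> nz a b ->
  HasL LL a b c -> HasL LL a' b' c' ->
  HasL LL (a' - 2*(a*a'+b*b')/(a*a+b*b)*a) (b' - 2*(a*a'+b*b')/(a*a+b*b)*b)
         (c' - 2*(a*a'+b*b')/(a*a+b*b)*c).
Proof. intros [_ [_ [_ [_ [_ Hv]]]]] N [M1 [HM1 E1]] [M2 [HM2 E2]].
  eapply HasL_coll; [apply (Hv M1 M2); auto|]. apply reflect_line_lin; auto. Qed.

Lemma HL_bisect P LL a1 b1 c1 a2 b2 c2 al be ga : origami_pair P LL -> nz a1 b1 -> nz a2 b2 ->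
  HasL LL a1 b1 c1 -> HasL LL a2 b2 c2 -> ~ same_set (lin a1 b1 c1) (lin a2 b2 c2) -> nz al be ->
  (forall p, lin al be ga p -> Rabs (a1*fst p + b1*snd p - c1) / sqrt (a1*a1+b1*b1) =
                              Rabs (a2*fst p + b2*snd p - c2) / sqrt (a2*a2+b2*b2)) ->
  HasL LL al be ga.
Proof. intros [_ [_ [_ [_ [Hiv _]]]]] N1 N2 [M1 [HM1 E1]] [M2 [HM2 E2]] Hne Nm Heq.
  apply (HasL_coll LL (lin al be ga)); [apply (Hiv M1 M2 (lin al be ga)); auto|intro p; tauto].
  split; [apply lin_is_line; auto|split].
  - intro S. apply Hne. eapply same_set_trans; [apply same_set_sym; exact E1|].
    eapply same_set_trans; [exact S|exact E2].
  - intros p Hp. exists (Rabs (a1*fst p + b1*snd p - c1) / sqrt (a1*a1+b1*b1)). split.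
    + eapply dist_same; [apply dist_lin; auto|apply same_set_sym; auto].
    + rewrite Heq; auto. eapply dist_same; [apply dist_lin; auto|apply same_set_sym; auto].
Qed.
Definition OK P LL := origami_pair P LL /\ P (0,0) /\ P (0,1).

Lemma nz10 : nz 1 0. Proof. left; lra. Qed.
Lemma nz01 : nz 0 1. Proof. right; lra. Qed.

Lemma pt_neq (u v : point) : fst u <> fst v \/ snd u <> snd v -> u <> v.
Proof. intros [H|H] E; subst; auto. Qed.

Lemma V0 P LL : OK P LL -> HasL LL 1 0 0.
Proof. intros [Hp [H0 H1]].
  pose proof (HL_through P LL (0,0) (0,1) Hp H0 H1 ltac:(apply (pt_neq (0,0) (0,1)); right; simpl; intro; lra)) as H.
  simpl in H. eapply HasL_eqc; eauto; ring. Qed.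

Lemma HR P LL c d : OK P LL -> HasL LL 0 1 d -> HasL LL 0 1 c -> HasL LL 0 1 (2*d - c).
Proof. intros [Hp _] Hd Hc. pose proof (HL_refl P LL 0 1 d 0 1 c Hp nz01 Hd Hc) as H.
  apply (HasL_scale _ _ _ _ (-1)) in H; [|lra]. eapply HasL_eqc; eauto; field. Qed.

Lemma VR P LL c d : OK P LL -> HasL LL 1 0 d -> HasL LL 1 0 c -> HasL LL 1 0 (2*d - c).
Proof. intros [Hp _] Hd Hc. pose proof (HL_refl P LL 1 0 d 1 0 c Hp nz10 Hd Hc) as H.
  apply (HasL_scale _ _ _ _ (-1)) in H; [|lra]. eapply HasL_eqc; eauto; field. Qed.

Lemma H0L P LL : OK P LL -> HasL LL 0 1 0.
Proof. intros HO. pose proof HO as [Hp [H0 H1]].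
  pose proof (HL_bis P LL (0,0) (0,1) Hp H0 H1 ltac:(apply (pt_neq (0,0) (0,1)); right; simpl; intro; lra)) as Hh.
  simpl in Hh. apply (HasL_scale _ _ _ _ (/2)) in Hh; [|lra].
  assert (Hh2 : HasL LL 0 1 (/2)) by (eapply HasL_eqc; eauto; field).
  assert (Pm : P (0, /2)).
  { apply (Pt_meet P LL 1 0 0 0 1 (/2)); auto; [apply (V0 P LL); auto|intro; lra|unfold lin; simpl; lra|unfold lin; simpl; lra]. }
  pose proof (HL_bis P LL (0,0) (0,/2) Hp H0 Pm ltac:(apply (pt_neq (0,0) (0,/2)); right; simpl; intro; lra)) as Hq.
  simpl in Hq. assert (Hq2 : HasL LL 0 1 (/4)) by (eapply HasL_eqc; eauto; field).
  pose proof (HR P LL (/2) (/4) HO Hq2 Hh2) as R. eapply HasL_eqc; eauto; field.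
Qed.

Lemma H1L P LL : OK P LL -> HasL LL 0 1 1.
Proof. intros HO. pose proof HO as [Hp [H0 H1]].
  pose proof (HL_bis P LL (0,0) (0,1) Hp H0 H1 ltac:(apply (pt_neq (0,0) (0,1)); right; simpl; intro; lra)) as Hh.
  simpl in Hh. apply (HasL_scale _ _ _ _ (/2)) in Hh; [|lra].
  assert (Hh2 : HasL LL 0 1 (/2)) by (eapply HasL_eqc; eauto; field).
  pose proof (HR P LL 0 (/2) HO Hh2 (H0L P LL HO)) as R. eapply HasL_eqc; eauto; field.
Qed.

Lemma sqrt01 : sqrt (0*0+1*1) = 1.
Proof. replace (0*0+1*1) with 1 by ring. apply sqrt_1. Qed.
Lemma sqrt10 : sqrt (1*1+0*0) = 1.
Proof. replace (1*1+0*0) with 1 by ring. apply sqrt_1. Qed.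

Lemma D1L P LL : OK P LL -> HasL LL 1 (-1) 0.
Proof. intros HO. pose proof HO as [Hp [H0 H1]].
  apply (HL_bisect P LL 0 1 0 1 0 0 1 (-1) 0 Hp nz01 nz10 (H0L P LL HO) (V0 P LL HO)).
  - intro S. specialize (S (0,1)). unfold lin in S; simpl in S. lra.
  - left; lra.
  - intros p Hp'. unfold lin in Hp'. rewrite sqrt01, sqrt10.
    replace (0 * fst p + 1 * snd p - 0) with (1 * fst p + 0 * snd p - 0) by lra. reflexivity.
Qed.

Lemma HtoV P LL c : OK P LL -> HasL LL 0 1 c -> HasL LL 1 0 c.
Proof. intros HO Hc. pose proof HO as [Hp _].
  pose proof (HL_refl P LL 1 (-1) 0 0 1 c Hp ltac:(left; lra) (D1L P LL HO) Hc) as H.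
  eapply HasL_eqc; eauto; field. Qed.
Lemma VtoH P LL c : OK P LL -> HasL LL 1 0 c -> HasL LL 0 1 c.
Proof. intros HO Hc. pose proof HO as [Hp _].
  pose proof (HL_refl P LL 1 (-1) 0 1 0 c Hp ltac:(left; lra) (D1L P LL HO) Hc) as H.
  eapply HasL_eqc; eauto; field. Qed.

Lemma VtoP P LL c : OK P LL -> HasL LL 1 0 c -> P (c, 0).
Proof. intros HO Hc. pose proof HO as [Hp _].
  apply (Pt_meet P LL 1 0 c 0 1 0); auto; [apply (H0L P LL); auto|intro; lra|unfold lin; simpl; lra|unfold lin; simpl; lra]. Qed.

Lemma PtoV P LL c : OK P LL -> P (c, 0) -> HasL LL 1 0 c.
Proof. intros HO Hc. pose proof HO as [Hp [H0 _]].
  destruct (Req_dec c 0) as [E|E]; [subst; apply (V0 P LL); auto|].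
  pose proof (HL_bis P LL (0,0) (c,0) Hp H0 Hc ltac:(apply (pt_neq (0,0) (c,0)); left; simpl; intro; lra)) as Hh.
  simpl in Hh. apply (HasL_scale _ _ _ _ (/(2*c))) in Hh; [|apply Rinv_neq_0_compat; lra].
  assert (Hh2 : HasL LL 1 0 (c/2)) by (eapply HasL_eqc; eauto; field; auto).
  pose proof (VR P LL 0 (c/2) HO Hh2 (V0 P LL HO)) as R. eapply HasL_eqc; eauto; field.
Qed.

Lemma V_add P LL a b : OK P LL -> HasL LL 1 0 a -> HasL LL 1 0 b -> HasL LL 1 0 (a+b).
Proof. intros HO Ha Hb. pose proof HO as [Hp _].
  destruct (Req_dec a b) as [E|E].
  - subst. pose proof (VR P LL 0 b HO Hb (V0 P LL HO)). eapply HasL_eqc; eauto; ring.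
  - pose proof (HL_bis P LL (a,0) (b,0) Hp (VtoP P LL a HO Ha) (VtoP P LL b HO Hb)
      ltac:(apply (pt_neq (a,0) (b,0)); left; simpl; intro; lra)) as Hh.
    simpl in Hh. apply (HasL_scale _ _ _ _ (/(2*(b-a)))) in Hh; [|apply Rinv_neq_0_compat; lra].
    assert (Hh2 : HasL LL 1 0 ((a+b)/2)) by (eapply HasL_eqc; eauto; field; lra).
    pose proof (VR P LL 0 ((a+b)/2) HO Hh2 (V0 P LL HO)) as R. eapply HasL_eqc; eauto; field.
Qed.

Lemma V_opp P LL a : OK P LL -> HasL LL 1 0 a -> HasL LL 1 0 (-a).
Proof. intros HO Ha. pose proof (VR P LL a 0 HO (V0 P LL HO) Ha). eapply HasL_eqc; eauto; ring. Qed.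

Lemma V1 P LL : OK P LL -> HasL LL 1 0 1.
Proof. intro HO. apply (HtoV P LL); auto. apply (H1L P LL); auto. Qed.

Lemma D_of P LL m : OK P LL -> HasL LL 1 0 m -> HasL LL m (-1) 0.
Proof. intros HO Hm. pose proof HO as [Hp [H0 _]].
  assert (Q : P (1, m)).
  { apply (Pt_meet P LL 1 0 1 0 1 m); auto; [apply (V1 P LL); auto|apply (VtoH P LL); auto|intro; lra|unfold lin; simpl; lra|unfold lin; simpl; lra]. }
  pose proof (HL_through P LL (0,0) (1,m) Hp H0 Q ltac:(apply (pt_neq (0,0) (1,m)); left; simpl; intro; lra)) as H.
  simpl in H. eapply HasL_eqc; eauto; ring. Qed.

Lemma V_div P LL a b : OK P LL -> HasL LL 1 0 a -> HasL LL 1 0 b -> a <> 0 -> HasL LL 1 0 (b/a).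
Proof. intros HO Ha Hb Ha0. pose proof HO as [Hp _].
  destruct (Req_dec b 0) as [E|E].
  - subst. replace (0/a) with 0 by (field; auto). apply (V0 P LL); auto.
  - assert (Q1 : P (b/a, b)).
    { apply (Pt_meet P LL a (-1) 0 0 1 b); auto; [apply (D_of P LL); auto|apply (VtoH P LL); auto|intro; lra
       |unfold lin; simpl; field; auto|unfold lin; simpl; lra]. }
    assert (Q2 : P (b/a, -b)).
    { apply (Pt_meet P LL (-a) (-1) 0 0 1 (-b)); auto; [apply (D_of P LL); auto; apply (V_opp P LL); auto
       |apply (VtoH P LL); auto; apply (V_opp P LL); auto|intro; lra
       |unfold lin; simpl; field; auto|unfold lin; simpl; lra]. }
    pose proof (HL_through P LL _ _ Hp Q1 Q2 ltac:(apply (pt_neq (b/a,b) (b/a,-b)); right; simpl; intro; lra)) as H.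
    simpl in H. apply (HasL_scale _ _ _ _ (-/(2*b))) in H; [|apply Ropp_neq_0_compat; apply Rinv_neq_0_compat; lra].
    eapply HasL_eqc; eauto; field; auto.
Qed.

Lemma V_mul P LL a b : OK P LL -> HasL LL 1 0 a -> HasL LL 1 0 b -> HasL LL 1 0 (a*b).
Proof. intros HO Ha Hb.
  destruct (Req_dec a 0) as [E|E]; [subst; replace (0*b) with 0 by ring; apply (V0 P LL); auto|].
  destruct (Req_dec b 0) as [F|F]; [subst; replace (a*0) with 0 by ring; apply (V0 P LL); auto|].
  pose proof (V_div P LL b 1 HO Hb (V1 P LL HO) F) as Hib.
  pose proof (V_div P LL (1/b) a HO Hib Ha ltac:(unfold Rdiv; rewrite Rmult_1_l; apply Rinv_neq_0_compat; auto)) as R.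
  eapply HasL_eqc; eauto; field; auto. Qed.

Lemma V_sqrt P LL x : OK P LL -> HasL LL 1 0 x -> HasL LL 1 0 (sqrt (1 + x*x)).
Proof. intros HO Hx. pose proof HO as [Hp _].
  destruct (Req_dec x 0) as [E|E].
  - subst. replace (1+0*0) with 1 by ring. rewrite sqrt_1. apply (V1 P LL); auto.
  - set (s := sqrt (1+x*x)).
    assert (Hs : s*s = 1+x*x) by (apply sqrt_sqrt; nra).
    assert (Hs0 : 0 < s) by (apply sqrt_lt_R0; nra).
    assert (Dx := D_of P LL x HO Hx).
    assert (B : HasL LL x (-(s+1)) 0).
    { apply (HL_bisect P LL 0 1 0 x (-1) 0 x (-(s+1)) 0 Hp nz01 ltac:(right; lra) (H0L P LL HO) Dx).
      - intro S. specialize (S (1,0)). unfold lin in S; simpl in S. apply E. lra.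
      - left; auto.
      - intros p Hp'. unfold lin in Hp'. rewrite sqrt01.
        replace (x*x + -1 * -1) with (1+x*x) by ring. fold s.
        replace (x * fst p + -1 * snd p - 0) with (s * snd p) by nra.
        replace (0 * fst p + 1 * snd p - 0) with (snd p) by ring.
        rewrite Rabs_mult, (Rabs_pos_eq s) by lra. field; lra. }
    assert (B' : HasL LL x (s+1) 0).
    { pose proof (HL_refl P LL 0 1 0 x (-(s+1)) 0 Hp nz01 (H0L P LL HO) B) as H.
      eapply HasL_eqc; eauto; field. }
    assert (Q1 : P (s+1, x)).
    { apply (Pt_meet P LL x (-(s+1)) 0 0 1 x); auto; [apply (VtoH P LL); auto|intro; lra
       |unfold lin; simpl; ring|unfold lin; simpl; lra]. }
    assert (Q2 : P (s+1, -x)).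
    { apply (Pt_meet P LL x (s+1) 0 0 1 (-x)); auto; [apply (VtoH P LL); auto; apply (V_opp P LL); auto|intro; lra
       |unfold lin; simpl; ring|unfold lin; simpl; lra]. }
    pose proof (HL_through P LL _ _ Hp Q1 Q2 ltac:(apply (pt_neq (s+1,x) (s+1,-x)); right; simpl; intro; lra)) as H.
    simpl in H. apply (HasL_scale _ _ _ _ (-/(2*x))) in H; [|apply Ropp_neq_0_compat; apply Rinv_neq_0_compat; lra].
    assert (H' : HasL LL 1 0 (s+1)) by (eapply HasL_eqc; eauto; field; auto).
    pose proof (V_add P LL (s+1) (-1) HO H' (V_opp P LL 1 HO (V1 P LL HO))) as R.
    eapply HasL_eqc; eauto; ring.
Qed.
Definition Gr (a : R) : Prop := P0 (a, 0).

Lemma Gr_lift (f : R -> R -> R) :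
  (forall P LL a b, OK P LL -> HasL LL 1 0 a -> HasL LL 1 0 b -> HasL LL 1 0 (f a b)) ->
  forall a b, Gr a -> Gr b -> Gr (f a b).
Proof. intros Hf a b Ha Hb P H0 H1 [LL Hp].
  assert (HO : OK P LL) by (split; auto).
  apply (VtoP P LL); auto. apply (Hf P LL); auto; apply (PtoV P LL); auto.
  - apply Ha; auto; exists LL; auto.
  - apply Hb; auto; exists LL; auto. Qed.

Lemma Gr_0 : Gr 0.
Proof. intros P H0 _ _. auto. Qed.
Lemma Gr_1 : Gr 1.
Proof. intros P H0 H1 [LL Hp]. assert (HO : OK P LL) by (split; auto). apply (VtoP P LL); auto. apply (V1 P LL); auto. Qed.
Lemma Gr_add a b : Gr a -> Gr b -> Gr (a+b).
Proof. apply (Gr_lift Rplus). intros; eapply V_add; eauto. Qed.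
Lemma Gr_mul a b : Gr a -> Gr b -> Gr (a*b).
Proof. apply (Gr_lift Rmult). intros; eapply V_mul; eauto. Qed.
Lemma Gr_opp a : Gr a -> Gr (-a).
Proof. intro H. apply (Gr_lift (fun x _ => -x) (fun P LL a b HO Ha _ => V_opp P LL a HO Ha) a a H H). Qed.
Lemma Gr_inv a : Gr a -> a <> 0 -> Gr (/a).
Proof. intros H Ha. replace (/a) with (1/a) by (field; auto).
  apply (Gr_lift (fun x y => y / x)); auto; [|apply Gr_1].
  intros P LL x y HO Hx Hy.
  destruct (Req_dec x 0) as [E|E].
  - (* irrelevant case: we only use it with x = a <> 0, but must handle it *)
    subst. unfold Rdiv. rewrite Rinv_0, Rmult_0_r. apply (V0 P LL); auto.
  - eapply V_div; eauto. Qed.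
Lemma Gr_sqrt a : Gr a -> Gr (sqrt (1 + a*a)).
Proof. intro H. apply (Gr_lift (fun x _ => sqrt (1+x*x)) (fun P LL a b HO Ha _ => V_sqrt P LL a HO Ha) a a H H). Qed.

Lemma Gr_F0 a : Gr a -> F0 a.
Proof. intro H. exists (0,0), (a,0). split; [intros P H0 _ _; auto|split; auto].
  unfold pdist; cbn [fst snd]. replace ((0 - a)^2 + (0-0)^2) with (Rsqr a) by (unfold Rsqr; ring).
  rewrite sqrt_Rsqr_abs; auto. Qed.

Theorem mainTheorem4 :
  forall z : C, F_sqrt1x2 z <-> (exists a : R, z = RtoC a /\ F0 a).
Proof.
  intro z. split.
  - intro Hz.
    set (S := fun w : C => exists a, w = RtoC a /\ Gr a).
    assert (HS : S z).
    { apply Hz.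
      - split; [exists 0; split; [reflexivity|apply Gr_0]|].
        split; [exists 1; split; [reflexivity|apply Gr_1]|].
        split; [intros x y [a [-> Ha]] [b [-> Hb]]; exists (a+b); split; [symmetry; apply RtoC_add|apply Gr_add; auto]|].
        split; [intros x [a [-> Ha]]; exists (-a); split; [symmetry; apply RtoC_op|apply Gr_opp; auto]|].
        split; [intros x y [a [-> Ha]] [b [-> Hb]]; exists (a*b); split; [symmetry; apply RtoC_mul|apply Gr_mul; auto]|].
        intros x [a [-> Ha]] Hn. assert (a <> 0) by (intro E; apply Hn; subst; reflexivity).
        exists (/a); split; [symmetry; apply RtoC_iv; auto|apply Gr_inv; auto].
      - intros x [a [-> Ha]]. exists (RtoC (sqrt (1+a*a))). split.
        + exists (sqrt (1+a*a)); split; auto; apply Gr_sqrt; auto.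
        + rewrite <- RtoC_mul, <- RtoC_mul, <- RtoC_add. rewrite sqrt_sqrt; auto. nra. }
    destruct HS as [a [Ha Ga]]. exists a. split; auto. apply Gr_F0; auto.
  - intros [a [-> Ha]]. apply dir1; auto.
Qed.
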